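(* Let $n\ge 1$ and consider the discrete-time system $x_{k+1}=A_kx_k+b_ku_k$, $y_k=c_kx_k$ ($k\in\mathbb{Z}$), where each $A_k$ is a real $n\times n$ matrix, $b_k\in\mathbb{R}^{n\times 1}$ and $c_k\in\mathbb{R}^{1\times n}$. Suppose the system is completely controllable, completely observable, and $c_k\,\operatorname{adj}(A_k)\,b_k\neq 0$ for every $k\in\mathbb{Z}$. Then the system is uniformly nullifiable by memoryless linear output feedback.
   Context: Complete controllability: for every $k\in\mathbb{Z}$ and every $\xi_s,\xi_f\in\mathbb{R}^n$ there are controls $u_k,\dots,u_{k+n-1}$ such that $x_k=\xi_s$ implies $x_{k+n}=\xi_f$. Complete observability: for every $k\in\mathbb{Z}$ and all controls $u_k,\dots,u_{k+n-2}$, the state $x_k$ is uniquely determined by the outputs $y_k,\dots,y_{k+n-1}$. $\operatorname{adj}(A)$ denotes the adjugate of $A$ (the matrix whose $(j,i)$ entry is $(-1)^{i+j}$ times the minor of $A$ obtained by deleting row $i$ and column $j$), so $A\operatorname{adj}(A)=\det(A)I$. Uniform nullifiability by memoryless linear output feedback: there exist scalars $\{F_k\}_{k\in\mathbb{Z}}$ and $N\in\mathbb{N}$ such that for every $k\in\mathbb{Z}$ and every $x_k\in\mathbb{R}^n$, the sequence generated by the closed-loop dynamics $x_{j+1}=(A_j+F_jb_jc_j)x_j$ (i.e. the feedback $u_j=F_jy_j$) satisfies $x_{k+N}=0$. *)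

(* Defs.v *)
From HB Require Import structures.
From mathcomp Require Import all_boot all_order all_algebra.
From mathcomp Require Import reals.
Set Implicit Arguments. Unset Strict Implicit. Unset Printing Implicit Defensive.
Import Order.TTheory GRing.Theory Num.Theory.
Local Open Scope ring_scope.

(* State of x_{j+1} = A_j x_j + b_j u_j, started at time k with x_k = xi,
   after m steps: traj A b u k xi m = x_{k+m}. *)
Fixpoint traj (R : realType) (n : nat) (A : int -> 'M[R]_n)
  (b : int -> 'cV[R]_n) (u : int -> R) (k : int) (xi : 'cV[R]_n) (m : nat)
  : 'cV[R]_n :=
  match m with
  | O => xi
  | S m' => A (k + m'%:Z) *m traj A b u k xi m' + u (k + m'%:Z) *: b (k + m'%:Z)
  end.

(* Complete controllability: any xi_s at time k can be steered to any xi_f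
   at time k+n (only u_k,...,u_{k+n-1} enter traj ... n). *)
Definition completely_controllable (R : realType) (n : nat)
  (A : int -> 'M[R]_n) (b : int -> 'cV[R]_n) : Prop :=
  forall (k : int) (xi_s xi_f : 'cV[R]_n),
    exists u : int -> R, traj A b u k xi_s n = xi_f.

Definition completely_observable (R : realType) (n : nat)
  (A : int -> 'M[R]_n) (b : int -> 'cV[R]_n) (c : int -> 'rV[R]_n) : Prop :=
  forall (k : int) (u : int -> R) (xi xi' : 'cV[R]_n),
    (forall m : nat, (m < n)%N ->
       c (k + m%:Z) *m traj A b u k xi m = c (k + m%:Z) *m traj A b u k xi' m) ->
    xi = xi'.

(* Closed loop x_{j+1} = (A_j + F_j b_j c_j) x_j, i.e. u_j = F_j y_j. *)
Fixpoint cl_traj (R : realType) (n : nat) (A : int -> 'M[R]_n)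
  (b : int -> 'cV[R]_n) (c : int -> 'rV[R]_n) (F : int -> R)
  (k : int) (xi : 'cV[R]_n) (m : nat) : 'cV[R]_n :=
  match m with
  | O => xi
  | S m' => (A (k + m'%:Z) + F (k + m'%:Z) *: (b (k + m'%:Z) *m c (k + m'%:Z)))
              *m cl_traj A b c F k xi m'
  end.

Definition uniformly_nullifiable_output_feedback (R : realType) (n : nat)
  (A : int -> 'M[R]_n) (b : int -> 'cV[R]_n) (c : int -> 'rV[R]_n) : Prop :=
  exists (F : int -> R) (N : nat),
    forall (k : int) (xi : 'cV[R]_n), cl_traj A b c F k xi N = 0.

(* Main.v *)
Require Import Defs.
From HB Require Import structures.
From mathcomp Require Import all_boot all_order all_algebra.
From mathcomp Require Import reals.
From mathcomp Require Import zify ring lra.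
From Stdlib Require Import ClassicalEpsilon.
Import Order.TTheory GRing.Theory Num.Theory.
Local Open Scope ring_scope.
Set Implicit Arguments. Unset Strict Implicit. Unset Printing Implicit Defensive.

Section Gen.
Variable R : realType.
Variable n : nat.

Fixpoint Phi (M : int -> 'M[R]_n) (t : int) (d : nat) : 'M[R]_n :=
  match d with O => 1%:M | S d' => M (t + d'%:Z) *m Phi M t d' end.

Lemma PhiS M t d : Phi M t d.+1 = M (t + d%:Z) *m Phi M t d.
Proof. by []. Qed.

Lemma Phi_add M t d1 d2 :
  Phi M t (d1 + d2) = Phi M (t + d1%:Z) d2 *m Phi M t d1.
Proof.
elim: d2 => [|d2 IH]; first by rewrite addn0 /= mul1mx.
by rewrite addnS /= IH mulmxA PoszD addrA.
Qed.

Lemma Phi1l M t d : Phi M t d.+1 = Phi M (t + 1) d *m M t.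
Proof.
by rewrite -add1n Phi_add /= addr0 mulmx1.
Qed.

Lemma Phi_eq M M' t d :
  (forall q, (q < d)%N -> M (t + q%:Z) = M' (t + q%:Z)) ->
  Phi M t d = Phi M' t d.
Proof.
elim: d => [//|d IH] H /=.
by rewrite H // IH // => q Hq; apply: H; apply: ltnW.
Qed.

Lemma traj_u0 (M : int -> 'M[R]_n) b t xi d :
  traj M b (fun _ => 0) t xi d = Phi M t d *m xi.
Proof.
elim: d => [|d IH] /=; first by rewrite mul1mx.
by rewrite IH scale0r addr0 mulmxA.
Qed.

Lemma traj_zero (M : int -> 'M[R]_n) b t d :
  traj M b (fun _ => 0) t 0 d = 0.
Proof. by rewrite traj_u0 mulmx0. Qed.

Lemma traj_formula (M : int -> 'M[R]_n) b u t d :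
  traj M b u t 0 d = \sum_(q < d) u (t + q%:Z) *:
     (Phi M (t + q.+1%:Z) (d - q.+1) *m b (t + q%:Z)).
Proof.
elim: d => [|d IH]; first by rewrite big_ord0.
rewrite /= IH big_ord_recr /= subnn /= mul1mx; congr (_ + _).
rewrite mulmx_sumr; apply: eq_bigr => q _ /=.
rewrite -scalemxAr; congr (_ *: _).
have Hq : (q.+1 <= d)%N by exact: ltn_ord.
rewrite subSn // PhiS mulmxA; congr (M _ *m _ *m _).
by rewrite -addrA -PoszD subnKC.
Qed.

Lemma traj_fb (M1 M2 : int -> 'M[R]_n) (b : int -> 'cV[R]_n)
  (c : int -> 'rV[R]_n) (G : int -> R) u t xi :
  (forall j, M2 j = M1 j + G j *: (b j *m c j)) ->
  forall d, traj M1 b (fun j => u j + G j * (c j *m traj M2 b u t xi `|j - t|%N) 0 0) t xi d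
            = traj M2 b u t xi d.
Proof.
move=> HM d; elim: d => [|d IH] /=; first by [].
rewrite IH HM addrAC subrr add0r absz_nat.
rewrite mulmxDl -!scalemxAl -mulmxA [c _ *m _]mx11_scalar mul_mx_scalar.
by rewrite scalerA mxE mulr1n addrAC scalerDl addrA.
Qed.

Lemma cl_traj_Phi A b c F k xi m :
  cl_traj A b c F k xi m =
  Phi (fun j => A j + F j *: (b j *m c j)) k m *m xi.
Proof.
elim: m => [|m IH] /=; first by rewrite mul1mx.
by rewrite IH mulmxA.
Qed.

End Gen.

Section Sys.
Variable R : realType.
Variable n : nat.
Variable A : int -> 'M[R]_n.
Variable b : int -> 'cV[R]_n.
Variable c : int -> 'rV[R]_n.
Hypothesis Hn : (0 < n)%N.
Hypothesis Hc : completely_controllable A b.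
Hypothesis Ho : completely_observable A b c.
Hypothesis Hadj : forall k : int, (c k *m \adj (A k) *m b k) 0 0 != 0.

Definition gam j := (c j *m \adj (A j) *m b j) 0 0.
Definition Fs j := - \det (A j) / gam j.
Definition S j := A j + Fs j *: (b j *m c j).
Definition g j := \adj (A j) *m b j.
Definition h j := c j *m \adj (A j).

Lemma gam_neq0 j : gam j != 0. Proof. exact: Hadj. Qed.

Lemma cg j : c j *m g j = (gam j)%:M.
Proof. by rewrite /g mulmxA [LHS]mx11_scalar. Qed.

Lemma hb j : h j *m b j = (gam j)%:M.
Proof. by rewrite /h [LHS]mx11_scalar. Qed.

Lemma Sg j : S j *m g j = 0.
Proof.
rewrite /S mulmxDl -scalemxAl -mulmxA cg mul_mx_scalar /g mulmxA mul_mx_adj.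
rewrite mul_scalar_mx scalerA -scalerDl /Fs divfK ?gam_neq0 //.
by rewrite subrr scale0r.
Qed.

Lemma hS j : h j *m S j = 0.
Proof.
rewrite /S mulmxDr -scalemxAr mulmxA hb mul_scalar_mx /h -mulmxA mul_adj_mx.
rewrite mul_mx_scalar scalerA -scalerDl /Fs divfK ?gam_neq0 //.
by rewrite subrr scale0r.
Qed.

Definition Mcl (d : int -> R) j := S j + d j *: (b j *m c j).

Lemma Mcl_A d j : A j + (Fs j + d j) *: (b j *m c j) = Mcl d j.
Proof. by rewrite /Mcl /S scalerDl addrA. Qed.

Lemma Mcl_apply d j z :
  Mcl d j *m z = S j *m z + (d j * (c j *m z) 0 0) *: b j.
Proof.
rewrite /Mcl mulmxDl -scalemxAl -mulmxA {1}[c j *m z]mx11_scalar mul_mx_scalar.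
by rewrite scalerA.
Qed.

Lemma ctrbS t (w : 'cV[R]_n) : exists u, traj S b u t 0 n = w.
Proof.
have [u Hu] := Hc t 0 w.
exists (fun j => u j + (- Fs j) * (c j *m traj A b u t 0 `|j - t|%N) 0 0).
rewrite (@traj_fb _ _ S A b c (fun j => - Fs j)) // => j.
by rewrite /S scaleNr addrK.
Qed.

Lemma obsS t (z : 'cV[R]_n) :
  (forall q, (q < n)%N -> c (t + q%:Z) *m (Phi S t q *m z) = 0) -> z = 0.
Proof.
move=> Hz.
have E : forall q, (q <= n)%N -> Phi S t q *m z = traj A b (fun _ => 0) t z q.
  elim=> [|q IH] Hq /=; first by rewrite mul1mx.
  rewrite -IH ?(ltnW Hq) // scale0r addr0 -mulmxA /S mulmxDl -scalemxAl.
  by rewrite -mulmxA Hz // mulmx0 scaler0 addr0.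
apply: (Ho (k:=t) (u:=fun _ => 0) (xi:=z) (xi':=0)) => q Hq.
by rewrite traj_zero mulmx0 -E ?(ltnW Hq) // Hz.
Qed.

Lemma kerS j z : S j *m z = 0 -> z = ((c j *m z) 0 0 / gam j) *: g j.
Proof.
move=> Hz; apply/eqP; rewrite -subr_eq0; apply/eqP.
set z' := z - _.
have Sz' : S j *m z' = 0 by rewrite mulmxBr Hz -scalemxAr Sg scaler0 subrr.
have cz' : c j *m z' = 0.
  by rewrite mulmxBr -scalemxAr cg scale_scalar_mx divfK ?gam_neq0 // -mx11_scalar subrr.
apply: (@obsS j) => q _.
case: q => [|q]; first by rewrite addr0 mul1mx.
by rewrite Phi1l -mulmxA Sz' !mulmx0.
Qed.

Lemma b_notin j (w : 'cV[R]_n) (a : R) : S j *m w = a *: b j -> a = 0.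
Proof.
move=> E.
have : h j *m (S j *m w) = 0 by rewrite mulmxA hS mul0mx.
rewrite E -scalemxAr hb => /matrixP /(_ 0 0).
rewrite !mxE eqxx mulr1n => /eqP; rewrite mulf_eq0 (negbTE (gam_neq0 j)) orbF.
by move/eqP.
Qed.

Lemma b_neq0 j : b j != 0.
Proof.
apply/eqP=> E; have := hb j; rewrite E mulmx0 => /matrixP /(_ 0 0).
by rewrite !mxE eqxx mulr1n => /eqP; rewrite eq_sym (negbTE (gam_neq0 j)).
Qed.


Lemma notin_seq (s : seq R) : exists t : R, t \notin s.
Proof.
exists (1 + \sum_(y <- s) `|y|).
suff H : forall y, y \in s -> y < 1 + \sum_(y <- s) `|y|.
  by apply/negP => /H; rewrite ltxx.
elim: s => [//|a s IH] y; rewrite inE big_cons => /orP [/eqP ->|Hy].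
  have h1 : a <= `|a| by exact: ler_norm.
  have h2 : 0 <= \sum_(y <- s) `|y| by apply: sumr_ge0 => i _; exact: normr_ge0.
  lra.
have h1 := IH y Hy.
have h2 : 0 <= `|a| by exact: normr_ge0.
lra.
Qed.

Lemma sc11_eq0 (a : R) : ((a%:M : 'M[R]_1) == 0) = (a == 0).
Proof.
apply/eqP/eqP => [/matrixP /(_ 0 0)|->]; last by rewrite raddf0.
by rewrite !mxE eqxx mulr1n.
Qed.

Lemma m11_neq0 (M : 'M[R]_1) : (M != 0) = (M 0 0 != 0).
Proof. by rewrite {1}[M]mx11_scalar sc11_eq0. Qed.

Lemma generic m p (K : 'M[R]_(m, p)) (L : seq 'rV[R]_p) :
  (forall l, l \in L -> exists v : 'cV_p, K *m v = 0 /\ l *m v != 0) ->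
  exists v : 'cV_p, K *m v = 0 /\ forall l, l \in L -> l *m v != 0.
Proof.
elim: L => [|l L IH] HL; first by exists 0; rewrite mulmx0.
have [v1 [Kv1 Hv1]] : exists v : 'cV_p, K *m v = 0 /\ forall l, l \in L -> l *m v != 0.
  by apply: IH => l' Hl'; apply: HL; rewrite inE Hl' orbT.
have [w [Kw Hw]] := HL l (mem_head _ _).
have [t Ht] := notin_seq [seq - (l' *m v1) 0 0 / (l' *m w) 0 0 | l' <- l :: L].
exists (v1 + t *: w); split; first by rewrite mulmxDr -scalemxAr Kw scaler0 addr0.
move=> l' Hl'.
have E : l' *m (v1 + t *: w) = ((l' *m v1) 0 0 + t * (l' *m w) 0 0)%:M.
  rewrite mulmxDr -scalemxAr {1}[l' *m v1]mx11_scalar {1}[l' *m w]mx11_scalar.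
  by rewrite scale_scalar_mx; apply/matrixP => i j; rewrite !mxE mulrnDl.
rewrite E sc11_eq0; apply/eqP => E0.
case: (eqVneq ((l' *m w) 0 0) 0) => Hb.
  rewrite Hb mulr0 addr0 in E0.
  move: Hl'; rewrite inE => /orP [/eqP El|Hl'].
    by move: Hw; rewrite -El m11_neq0 Hb eqxx.
  by move: (Hv1 l' Hl'); rewrite m11_neq0 E0 eqxx.
move/negP: Ht; apply; apply/mapP; exists l' => //.
apply: (mulIf Hb); rewrite divfK //; apply/eqP.
by rewrite -addr_eq0 addrC E0.
Qed.

Lemma unit_of_rinj n' (M : 'M[R]_n') : (forall v : 'rV_n', v *m M = 0 -> v = 0) -> M \in unitmx.
Proof.
move=> HM; rewrite -row_free_unit /row_free.
have K0 : kermx M == 0.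
  by apply/rowV0P => v; rewrite sub_kermx => /eqP; exact: HM.
have := mxrank_ker M; rewrite (eqP K0) mxrank0 => /esym/eqP.
rewrite subn_eq0 => H1; apply/eqP/anti_leq; rewrite H1 andbT.
exact: rank_leq_row.
Qed.

Lemma unit_of_linj n' (M : 'M[R]_n') : (forall z : 'cV_n', M *m z = 0 -> z = 0) -> M \in unitmx.
Proof.
move=> HM; rewrite -unitmx_tr; apply: unit_of_rinj => v Hv.
have : M *m v^T = 0 by rewrite -[M]trmxK -trmx_mul Hv trmx0.
by move/HM => /(congr1 trmx); rewrite trmxK trmx0.
Qed.

Lemma rank_unitl n' m (U : 'M[R]_n') (M : 'M[R]_(n', m)) :
  U \in unitmx -> \rank (U *m M) = \rank M.
Proof.
move=> HU; rewrite -mxrank_tr trmx_mul mxrankMfree ?mxrank_tr //.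
by rewrite row_free_unit unitmx_tr; exact: HU.
Qed.

Lemma entry_col m1 m2 m3 (M1 : 'M[R]_(m1, m2)) (M2 : 'M[R]_(m2, m3)) i j :
  (M1 *m M2) i j = (M1 *m col j M2) i 0.
Proof. by rewrite colE mulmxA -colE [RHS]mxE. Qed.


Section SVsec.
Variable t0 : int.
Variable x : 'cV[R]_n.

Definition HH := (n * n)%N.

Definition ep (a : nat) : 'rV[R]_HH.+1 := \row_(i < HH.+1) ((i : nat) == a)%:R.

Fixpoint X (q : nat) : 'M[R]_(n, HH.+1) :=
  match q with
  | 0 => x *m ep 0
  | q'.+1 => S (t0 + q'%:Z) *m X q' +
      (if c (t0 + q'%:Z) *m X q' == 0 then 0 else b (t0 + q'%:Z) *m ep q'.+1)
  end.

Definition ns q := c (t0 + q%:Z) *m X q != 0.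

Lemma XS q : X q.+1 = S (t0 + q%:Z) *m X q +
  (if ns q then b (t0 + q%:Z) *m ep q.+1 else 0).
Proof. by rewrite /ns if_neg. Qed.

Lemma ep_delta a (Ha : (a < HH.+1)%N) : ep a = delta_mx 0 (Ordinal Ha).
Proof. by apply/matrixP => i j; rewrite !mxE ord1 eqxx. Qed.

Lemma ep_big a : (HH.+1 <= a)%N -> ep a = 0.
Proof.
move=> Ha; apply/matrixP => i j; rewrite !mxE.
by case: eqP => // E; move: (ltn_ord j); rewrite E ltnNge Ha.
Qed.

Lemma one11 : delta_mx 0 0 = 1%:M :> 'M[R]_1.
Proof. by apply/matrixP => i j; rewrite !ord1 !mxE. Qed.

Lemma ep_ep a : (a < HH.+1)%N -> ep a *m (ep a)^T = 1%:M.
Proof. by move=> Ha; rewrite ep_delta trmx_delta mul_delta_mx one11. Qed.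

Definition Dk (s : nat) : 'M[R]_HH.+1 := diag_mx (\row_(j < HH.+1) ((j <= s)%N)%:R).

Lemma ep_D a s : ep a *m Dk s = if (a <= s)%N then ep a else 0.
Proof.
apply/matrixP => i j; rewrite mul_mx_diag !mxE.
case: (leqP a s) => Ha; rewrite !mxE.
  by case: eqP => [->|_]; rewrite ?Ha ?mulr1 ?mul0r.
case: eqP => [->|_]; last by rewrite mul0r.
by rewrite leqNgt Ha mulr0.
Qed.

Lemma D_ept a s : Dk s *m (ep a)^T = if (a <= s)%N then (ep a)^T else 0.
Proof.
rewrite -[Dk s]tr_diag_mx -trmx_mul ep_D.
by case: ifP => _ //; rewrite trmx0.
Qed.

Lemma X_D q s : (q <= s)%N -> X q *m Dk s = X q.
Proof.
elim: q => [|q IH] Hq; first by rewrite /= -mulmxA (ep_D 0 s).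
rewrite XS mulmxDl -mulmxA IH ?(ltnW Hq) //; congr (_ + _).
by case: ifP => _; rewrite ?mul0mx // -mulmxA (ep_D q.+1 s) Hq.
Qed.

Lemma X_D2 s e : X (s + e) *m Dk s = Phi S (t0 + s%:Z) e *m X s.
Proof.
elim: e => [|e IH]; first by rewrite addn0 X_D // mul1mx.
rewrite addnS XS mulmxDl -mulmxA IH PhiS mulmxA PoszD addrA.
case: ifP => _; last by rewrite mul0mx addr0.
by rewrite -[b _ *m _ *m _]mulmxA (ep_D (s + e).+1 s) ltnNge leq_addr /= mulmx0 addr0.
Qed.

Lemma Xcol0 q a : (q < a)%N -> X q *m (ep a)^T = 0.
Proof.
move=> Hqa; rewrite -(X_D (leqnn q)) -mulmxA D_ept.
by rewrite leqNgt Hqa mulmx0.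
Qed.

Lemma Xcol q : (q < HH)%N -> X q.+1 *m (ep q.+1)^T = if ns q then b (t0 + q%:Z) else 0.
Proof.
move=> Hq; rewrite XS mulmxDl -[S _ *m _ *m _]mulmxA Xcol0 ?mulmx0 // add0r.
case: ifP => _; last by rewrite mul0mx.
by rewrite -mulmxA ep_ep // mulmx1.
Qed.

Lemma Xcol_far q e : (q < HH)%N -> X (q.+1 + e) *m (ep q.+1)^T =
  if ns q then Phi S (t0 + q.+1%:Z) e *m b (t0 + q%:Z) else 0.
Proof.
move=> Hq.
rewrite -[(ep q.+1)^T](_ : Dk q.+1 *m (ep q.+1)^T = _); last by rewrite D_ept leqnn.
rewrite mulmxA X_D2 -mulmxA Xcol //.
by case: ifP => _; rewrite ?mulmx0.
Qed.

Lemma X0_ep : X 0 *m (ep 0)^T = x.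
Proof. by rewrite /= -mulmxA ep_ep // mulmx1. Qed.


Lemma kerS_row j (r : 'rV[R]_n) : r *m (S j)^T = 0 ->
  r = ((c j *m r^T) 0 0 / gam j) *: (g j)^T.
Proof.
move=> Hr.
have : S j *m r^T = 0 by rewrite -[S j]trmxK -trmx_mul Hr trmx0.
move/kerS => E.
transitivity ((r^T)^T); first by rewrite trmxK.
by rewrite {1}E linearZ.
Qed.

Lemma scale_entry m1 m2 (a : R) (M : 'M[R]_(m1, m2)) i j : (a *: M) i j = a * M i j.
Proof. by rewrite mxE. Qed.

Lemma rank_step q : (q < HH)%N ->
  (\rank (X q) <= \rank (X q.+1))%N /\
  (ns q -> ~~ ((g (t0 + q%:Z))^T <= (X q)^T)%MS -> (\rank (X q) < \rank (X q.+1))%N).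
Proof.
move=> Hq.
set j := t0 + q%:Z.
set Y := (X q)^T.
set Cap := (Y :&: kermx (S j)^T)%MS.
have K1 : (\rank (Y *m (S j)^T) + \rank Cap)%N = \rank Y by exact: mxrank_mul_ker.
have Hcap : forall v : 'rV_n, (v <= Cap)%MS ->
    v = ((c j *m v^T) 0 0 / gam j) *: (g j)^T /\ (v <= Y)%MS.
  move=> v; rewrite sub_capmx sub_kermx => /andP [HY /eqP Hv]; split => //.
  exact: kerS_row.
have Kc : (\rank Cap <= 1)%N.
  apply: leq_trans (rank_leq_row (g j)^T); apply: mxrankS; apply/row_subP => i.
  have [-> _] := Hcap _ (row_sub i Cap); exact: scalemx_sub.
have Cap0 : (forall v : 'rV_n, (v <= Y)%MS -> c j *m v^T = 0) \/ ~~ ((g j)^T <= Y)%MS ->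
    \rank Cap = 0%N.
  move=> Hcond; apply/eqP; rewrite mxrank_eq0; apply/rowV0P => v Hv.
  have [E HvY] := Hcap v Hv.
  case: Hcond => [Hc0|Hg].
    by rewrite E Hc0 // mxE mul0r scale0r.
  rewrite E; case: (eqVneq ((c j *m v^T) 0 0 / gam j) 0) => [->|Hne]; first by rewrite scale0r.
  exfalso; move/negP: Hg; apply.
  have H1 : (((c j *m v^T) 0 0 / gam j) *: (g j)^T <= Y)%MS by rewrite -E.
  rewrite -[(g j)^T](scalerK Hne); exact: scalemx_sub.
rewrite -[\rank (X q)]mxrank_tr -[\rank (X q.+1)]mxrank_tr -/Y.
case: (boolP (ns q)) => Hns.
  have XSq : X q.+1 = S j *m X q + b j *m ep q.+1 by rewrite XS Hns.
  set Y' := (X q.+1)^T.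
  have Ebt : ep q.+1 *m Y' = (b j)^T.
    by rewrite /Y' -[ep q.+1]trmxK -trmx_mul Xcol // Hns.
  have Sub1 : ((b j)^T <= Y')%MS by rewrite -Ebt submxMl.
  have EY : Y *m (S j)^T = (1%:M - (ep q.+1)^T *m ep q.+1) *m Y'.
    rewrite mulmxBl mul1mx -mulmxA Ebt /Y' XSq [(S j *m X q + _)^T]linearD /=.
    by rewrite !trmx_mul addrK.
  have Sub2 : (Y *m (S j)^T <= Y')%MS by rewrite EY submxMl.
  have Disj : (Y *m (S j)^T :&: (b j)^T)%MS = 0.
    apply/eqP/rowV0P => v; rewrite sub_capmx => /andP [/submxP [w ->] /submxP [be Eb]].
    have Eb' := congr1 trmx Eb; rewrite !trmx_mul !trmxK in Eb'.
    have Eb2 : S j *m (X q *m w^T) = (be 0 0) *: b j.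
      by rewrite mulmxA Eb' {1}[be]mx11_scalar tr_scalar_mx mul_mx_scalar.
    have := b_notin Eb2 => Hbe.
    by rewrite Eb [be]mx11_scalar Hbe raddf0 mul0mx.
  have Hb1 : \rank (b j)^T = 1%N.
    apply/eqP; rewrite eqn_leq rank_leq_row /= lt0n mxrank_eq0 trmx_eq0.
    exact: b_neq0.
  have K2 := mxrank_disjoint_sum Disj.
  have K3 : (\rank (Y *m (S j)^T + (b j)^T)%MS <= \rank Y')%N.
    by apply: mxrankS; rewrite addsmx_sub Sub2 Sub1.
  split.
    rewrite -K1; apply: leq_trans K3; by rewrite K2 Hb1 leq_add2l.
  move=> _ Hg; have C0 := Cap0 (or_intror Hg).
  rewrite -K1 C0 addn0; apply: leq_trans K3; by rewrite K2 Hb1 addn1.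
have Hc0 : c j *m X q = 0 by move/negPn: Hns => /eqP.
have XSq : X q.+1 = S j *m X q by rewrite XS (negbTE Hns) addr0.
have C0 : \rank Cap = 0%N.
  apply: Cap0; left => v /submxP [w ->].
  by rewrite trmx_mul trmxK mulmxA Hc0 mul0mx.
have E : \rank (X q.+1)^T = \rank (Y *m (S j)^T) by rewrite XSq trmx_mul.
by split; first by rewrite E -K1 C0 addn0.
Qed.

Lemma rank_mono q1 q2 : (q1 <= q2)%N -> (q2 <= HH)%N -> (\rank (X q1) <= \rank (X q2))%N.
Proof.
elim: q2 => [|q2 IH] H12 H2; first by move: H12; rewrite leqn0 => /eqP ->.
case: (eqVneq q1 q2.+1) => [->//|Hne].
have H12' : (q1 <= q2)%N by rewrite -ltnS ltn_neqAle Hne H12.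
apply: leq_trans (IH H12' (ltnW H2)) (rank_step H2).1.
Qed.

Lemma rank_X0 : x != 0 -> (0 < \rank (X 0))%N.
Proof.
move=> xnz; rewrite lt0n mxrank_eq0; apply: contra xnz => /eqP H0.
by rewrite -X0_ep H0 mul0mx.
Qed.

Lemma pigeon : x != 0 -> exists j, (j < n)%N /\ \rank (X (j * n)) = \rank (X (j.+1 * n)).
Proof.
move=> xnz.
case: (boolP [exists j : 'I_n, \rank (X (j * n)) == \rank (X (j.+1 * n))]).
  by move=> /existsP [j /eqP Hj]; exists j.
move=> /existsPn Hno; exfalso.
have Hb : forall j, (j <= n)%N -> (j < \rank (X (j * n)))%N.
  elim=> [|j IH] Hj; first by rewrite mul0n rank_X0.
  have Hm := @rank_mono (j * n) (j.+1 * n) (leq_mul (leqnSn j) (leqnn n)) (leq_mul Hj (leqnn n)).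
  have Hne : \rank (X (j * n)) != \rank (X (j.+1 * n)) := Hno (Ordinal Hj).
  have Hlt : (\rank (X (j * n)) < \rank (X (j.+1 * n)))%N by rewrite ltn_neqAle Hne Hm.
  exact: leq_ltn_trans (IH (ltnW Hj)) Hlt.
have := leq_ltn_trans (rank_leq_row (X (n * n))) (Hb n (leqnn n)).
by rewrite ltnn.
Qed.


Definition Dn s : 'M[R]_n := diag_mx (\row_(d < n) (ns (s + d))%:R).
Definition Om s : 'M[R]_n := \matrix_(d < n) (c (t0 + (s + d)%:Z) *m Phi S (t0 + s%:Z) d).
Definition Rm s : 'M[R]_n :=
  \matrix_(i, d) (Phi S (t0 + (s + d).+1%:Z) (n - d.+1) *m b (t0 + (s + d)%:Z)) i 0.
Definition Ps s : 'M[R]_(HH.+1, n) :=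
  \matrix_(a, d) (((a : nat) == (s + d).+1) && ns (s + d))%:R.

Lemma Om_unit s : Om s \in unitmx.
Proof.
apply: unit_of_linj => z Hz; apply: (@obsS (t0 + s%:Z)) => q Hq.
have := congr1 (row (Ordinal Hq)) Hz; rewrite row_mul rowK row0 /= => E.
by rewrite mulmxA -E PoszD addrA.
Qed.

Lemma obs_bound s : (\rank (X s) <= \rank (Dn s))%N.
Proof.
rewrite -(rank_unitl (X s) (Om_unit s)).
have -> : Om s *m X s = Dn s *m (Om s *m X s).
  apply/row_matrixP => d; rewrite [in RHS]row_mul row_diag_mx -scalemxAl -rowE mxE.
  case: (boolP (ns (s + d))) => Hns; first by rewrite scale1r.
  rewrite scale0r row_mul rowK -mulmxA -X_D2 mulmxA.
  by move/negPn: Hns => /eqP ->; rewrite mul0mx.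
exact: mxrankM_maxl.
Qed.

Lemma Rm_unit s : Rm s \in unitmx.
Proof.
apply: unit_of_rinj => v Hv; apply/rowP => i; rewrite mxE.
have [u Hu] := ctrbS (t0 + s%:Z) (delta_mx i 0).
rewrite traj_formula in Hu.
have E : Rm s *m (\col_(d < n) u (t0 + s%:Z + d%:Z)) = delta_mx i 0.
  rewrite -Hu; apply/matrixP => a z; rewrite ord1 !mxE summxE.
  apply: eq_bigr => d _; rewrite !mxE mulrC.
  by rewrite -addnS !PoszD !addrA.
have := congr1 (fun M => (v *m M) 0 0) E; rewrite mulmxA Hv mul0mx /=.
by rewrite -colE !mxE => <-.
Qed.

Lemma col_Ps s d : col d (Ps s) = if ns (s + d) then (ep (s + d).+1)^T else 0.
Proof.
apply/matrixP => a z; rewrite !mxE.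
by case: (ns (s + d)); rewrite ?andbT ?andbF ?mxE.
Qed.

Lemma XPs s : (s + n <= HH)%N -> X (s + n) *m Ps s = Rm s *m Dn s.
Proof.
move=> Hs; apply/matrixP => i d.
rewrite entry_col col_Ps mul_mx_diag [RHS]mxE [X in _ = _ * X]mxE.
have Hd := ltn_ord d.
case: (boolP (ns (s + d))) => Hns; last by rewrite mulmx0 mulr0 mxE.
have E : (s + n = (s + d).+1 + (n - d.+1))%N by lia.
rewrite E Xcol_far; last by lia.
by rewrite Hns mulr1 [RHS]mxE.
Qed.

Lemma col_span s : (s + n <= HH)%N -> \rank (X s) = \rank (X (s + n)) ->
  forall w : 'cV_HH.+1, exists u : 'cV_n, X (s + n) *m w = X (s + n) *m (Ps s *m u).
Proof.
move=> Hs Hr w.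
have Zsub : ((X (s + n) *m Ps s)^T <= (X (s + n))^T)%MS by rewrite trmx_mul submxMl.
have Hrk : (\rank (X (s + n))^T <= \rank (X (s + n) *m Ps s)^T)%N.
  rewrite !mxrank_tr XPs // rank_unitl ?Rm_unit // -Hr; exact: obs_bound.
have Heq : ((X (s + n))^T <= (X (s + n) *m Ps s)^T)%MS.
  rewrite -(mxrank_leqif_sup Zsub).2; apply/eqP/anti_leq.
  by rewrite Hrk mxrankS.
have : ((X (s + n) *m w)^T <= (X (s + n) *m Ps s)^T)%MS.
  by apply: submx_trans Heq; rewrite trmx_mul submxMl.
case/submxP => D HD; exists D^T.
have := congr1 trmx HD; rewrite !trmx_mul !trmxK => ->.
by rewrite mulmxA.
Qed.

Lemma DPs q s : (q <= s)%N -> Dk q *m Ps s = 0.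
Proof.
move=> Hqs; apply/matrixP => a d; rewrite mul_diag_mx !mxE.
case: (leqP a q) => Ha; last by rewrite mul0r.
case: eqP => [Ea|_]; last by rewrite mulr0.
exfalso; lia.
Qed.

Lemma ep0_Ps s : ep 0 *m Ps s = 0.
Proof.
have E0 : ep 0 = ep 0 *m Dk 0 by rewrite (ep_D 0 0).
by rewrite E0 -mulmxA DPs // mulmx0.
Qed.

Lemma XqPs q s : (q <= s)%N -> X q *m Ps s = 0.
Proof. by move=> Hqs; rewrite -(X_D (leqnn q)) -mulmxA DPs // mulmx0. Qed.


Lemma SV_main : x != 0 -> exists dl : int -> R, Phi (Mcl dl) t0 HH *m x = 0.
Proof.
move=> xnz.
have [j [Hj Hr]] := pigeon xnz.
have HTH : (j.+1 * n <= HH)%N by rewrite /HH leq_mul.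
rewrite mulSnr in Hr HTH.
set s := (j * n)%N in Hr HTH.
set T := (s + n)%N in Hr HTH.
have Hg : forall q, (s <= q)%N -> (q < T)%N -> ns q ->
    ((g (t0 + q%:Z))^T <= (X q)^T)%MS.
  move=> q Hsq HqT Hns; apply/negPn/negP => Hng.
  have HqH : (q < HH)%N by exact: leq_trans HqT HTH.
  have Hlt := (rank_step HqH).2 Hns Hng.
  have h1 := rank_mono Hsq (ltnW HqH).
  have h2 := rank_mono HqT HTH.
  have := leq_trans (leq_ltn_trans h1 Hlt) h2; by rewrite -Hr ltnn.
have Hspan := col_span HTH Hr.
pose L := ep 0 :: [seq c (t0 + q%:Z) *m X q | q <- iota 0 T & ns q].
have [v [Kv Hv]] : exists v : 'cV_HH.+1, X T *m v = 0 /\ forall l, l \in L -> l *m v != 0.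
  apply: generic.
  move=> l; rewrite inE => /orP [/eqP ->|].
    have [u Hu] := Hspan (ep 0)^T.
    exists ((ep 0)^T - Ps s *m u); split; first by rewrite mulmxBr Hu subrr.
    rewrite mulmxBr ep_ep // mulmxA ep0_Ps mul0mx subr0 m11_neq0 mxE.
    exact: oner_neq0.
  case/mapP => q; rewrite mem_filter mem_iota add0n => /andP [Hns /andP [_ HqT]] ->.
  case: (ltnP q s) => Hqs.
    have [a Ha] : exists a, (c (t0 + q%:Z) *m X q) 0 a != 0.
      case: (pickP (fun a => (c (t0 + q%:Z) *m X q) 0 a != 0)) => [a Ha|H0].
        by exists a.
      exfalso; move/negP: Hns; apply; apply/eqP/matrixP => i a.
      by rewrite ord1 [RHS]mxE; apply/eqP; move: (H0 a) => /negbFE.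
    pose w : 'cV_HH.+1 := Dk q *m delta_mx a 0.
    have [u Hu] := Hspan w.
    exists (w - Ps s *m u); split; first by rewrite mulmxBr Hu subrr.
    have E0 : X q *m Ps s = 0 := XqPs (ltnW Hqs).
    rewrite mulmxBr -!mulmxA (mulmxA (X q) (Ps s) u) E0 mul0mx mulmx0 subr0.
    rewrite /w (mulmxA (X q)) X_D // mulmxA -colE m11_neq0 mxE.
    exact: Ha.
  have := Hg q Hqs HqT Hns; case/submxP => D HD.
  have HgD : X q *m D^T = g (t0 + q%:Z).
    by rewrite -[X q]trmxK -trmx_mul -HD trmxK.
  exists (Dk q *m D^T); split.
    have ET : T = (q + (T - q))%N by rewrite subnKC // ltnW.
    rewrite {1}ET mulmxA X_D2 -mulmxA HgD.
    have -> : (T - q = (T - q.+1).+1)%N by rewrite subnSK.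
    by rewrite Phi1l -mulmxA Sg mulmx0.
  rewrite mulmxA -[c _ *m X q *m Dk q]mulmxA X_D // -mulmxA HgD cg m11_neq0 mxE /=.
  by rewrite mulr1n gam_neq0.
have Hl0 := Hv (ep 0) (mem_head _ _).
set lam := (ep 0 *m v) 0 0.
have lamnz : lam != 0 by rewrite -m11_neq0.
set v' := lam^-1 *: v.
have Kv' : X T *m v' = 0 by rewrite -scalemxAr Kv scaler0.
have Hl0' : ep 0 *m v' = 1%:M.
  rewrite -scalemxAr {1}[ep 0 *m v]mx11_scalar -/lam scale_scalar_mx mulVf //.
have Hv' : forall q, (q < T)%N -> ns q -> (c (t0 + q%:Z) *m X q *m v') 0 0 != 0.
  move=> q HqT Hns; rewrite /v' -scalemxAr scale_entry mulf_neq0 ?invr_eq0 //.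
  rewrite -m11_neq0; apply: Hv; rewrite inE; apply/orP; right.
  by apply/mapP; exists q => //; rewrite mem_filter mem_iota Hns add0n HqT.
pose dq (q : nat) := if ns q then (ep q.+1 *m v') 0 0 / (c (t0 + q%:Z) *m X q *m v') 0 0 else 0.
pose dl (k : int) := if (t0 <= k) then dq `|k - t0|%N else 0.
exists dl.
have Hdl : forall q : nat, dl (t0 + q%:Z) = dq q.
  move=> q; rewrite /dl lerDl lez_nat.
  by have -> : t0 + q%:Z - t0 = q%:Z by rewrite addrAC subrr add0r.
have Htraj : forall q, (q <= T)%N -> Phi (Mcl dl) t0 q *m x = X q *m v'.
  elim=> [|q IH] HqT.
    by rewrite /= mul1mx -mulmxA Hl0' mulmx1.
  rewrite PhiS -mulmxA IH ?(ltnW HqT) // Mcl_apply Hdl XS mulmxDl -mulmxA.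
  congr (_ + _); rewrite /dq.
  case: (boolP (ns q)) => Hns; last by rewrite mul0r scale0r mul0mx.
  rewrite mulmxA divfK ?Hv' // -mulmxA [ep _ *m v']mx11_scalar mul_mx_scalar.
  by rewrite [X in X *: _ = _]mxE eqxx mulr1n.
have EH : HH = (T + (HH - T))%N by rewrite subnKC.
by rewrite EH Phi_add -mulmxA Htraj // Kv' mulmx0.
Qed.

End SVsec.

Lemma SV t0 (x : 'cV[R]_n) : exists dl : int -> R, Phi (Mcl dl) t0 HH *m x = 0.
Proof.
case: (eqVneq x 0) => [->|xnz]; first by exists (fun _ => 0); rewrite mulmx0.
exact: SV_main xnz.
Qed.


Lemma block t : exists dl : int -> R, Phi (Mcl dl) t (n * HH) = 0.
Proof.
suff H : forall j, (j <= n)%N -> exists dl : int -> R, forall i : 'I_n, (i < j)%N ->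
    Phi (Mcl dl) t (j * HH) *m (delta_mx i 0 : 'cV_n) = 0.
  have [dl Hdl] := H n (leqnn n); exists dl; apply/matrixP => a i.
  move/matrixP: (Hdl i (ltn_ord i)) => /(_ a 0).
  by rewrite -colE /= !mxE.
elim=> [|j IH] Hj.
  by exists (fun _ => 0) => i; rewrite ltn0.
have [dl Hdl] := IH (ltnW Hj).
set P := Phi (Mcl dl) t (j * HH).
set t' := t + (j * HH)%:Z.
have [dl2 Hdl2] := SV t' (P *m delta_mx (Ordinal Hj) 0).
pose dl3 k := if k < t' then dl k else dl2 k.
exists dl3 => i Hi.
have E : Phi (Mcl dl3) t (j.+1 * HH) = Phi (Mcl dl2) t' HH *m P.
  rewrite mulSnr Phi_add -/t'; congr (_ *m _).
    apply: Phi_eq => q Hq; rewrite /Mcl /dl3; case: ifP => // H; exfalso.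
    move: H; rewrite /t'; lia.
  apply: Phi_eq => q Hq; rewrite /Mcl /dl3; case: ifP => // /negbT H; exfalso.
  move: H; rewrite /t'; lia.
rewrite E -mulmxA.
case: (ltnP i j) => Hij; first by rewrite Hdl // mulmx0.
have -> : i = Ordinal Hj.
  by apply: val_inj; apply/eqP; rewrite /= eqn_leq Hij -ltnS Hi.
exact: Hdl2.
Qed.

Lemma uniform : uniformly_nullifiable_output_feedback A b c.
Proof.
set L := (n * HH)%N.
have L0 : (0 < L)%N by rewrite /L /HH !muln_gt0 Hn.
set Lz := L%:Z.
have Lz0 : Lz != 0 by rewrite /Lz; lia.
have Hch : forall be : int, exists dl : int -> R, Phi (Mcl dl) (be * Lz) L = 0.
  by move=> be; exact: block.
pose dls := fun be => proj1_sig (constructive_indefinite_description _ (Hch be)).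
have Hdls : forall be, Phi (Mcl (dls be)) (be * Lz) L = 0.
  by move=> be; exact: (proj2_sig (constructive_indefinite_description _ (Hch be))).
pose dall k := dls (k %/ Lz)%Z k.
exists (fun k => Fs k + dall k), (L + L)%N => k xi.
rewrite cl_traj_Phi.
have EPhi : Phi (fun j => A j + (Fs j + dall j) *: (b j *m c j)) k (L + L) =
            Phi (Mcl dall) k (L + L).
  by apply: Phi_eq => q _; exact: Mcl_A.
rewrite EPhi.
set be := ((k %/ Lz)%Z + 1).
set B := be * Lz.
have aLz : `|Lz|%N = L by rewrite /Lz absz_nat.
have HB : k < B <= k + Lz.
  have h1 := divz_eq k Lz; have h2 := modz_ge0 k Lz0; have h3 := ltz_mod k Lz0.
  rewrite /B /be mulrDl mul1r.
  rewrite -abszE aLz in h3.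
  apply/andP; split; lia.
have Hd1 : (`|B - k|%N)%:Z = B - k.
  by rewrite gez0_abs //; case/andP: HB => H1 _; lia.
set d1 := `|B - k|%N in Hd1.
have Hd1L : (d1 <= L)%N.
  by case/andP: HB => _ H2; rewrite -lez_nat Hd1 -/Lz; lia.
have EL : (L + L = d1 + (L + (L - d1)))%N by lia.
have EB : k + d1%:Z = B by rewrite Hd1 addrC subrK.
rewrite EL !Phi_add EB.
have -> : Phi (Mcl dall) B L = Phi (Mcl (dls be)) B L.
  apply: Phi_eq => q Hq; rewrite /Mcl /dall.
  have -> : ((B + q%:Z) %/ Lz)%Z = be.
    rewrite /B divzMDl // divz_small ?addr0 //.
  by [].
by rewrite Hdls mulmx0 !mul0mx.
Qed.

End Sys.

Theorem theorem1 (R : realType) (n : nat) (A : int -> 'M[R]_n)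
  (b : int -> 'cV[R]_n) (c : int -> 'rV[R]_n) :
  (0 < n)%N ->
  completely_controllable A b ->
  completely_observable A b c ->
  (forall k : int, (c k *m \adj (A k) *m b k) 0 0 != 0) ->
  uniformly_nullifiable_output_feedback A b c.
Proof.
move=> Hn Hc Ho Hadj.
exact: (uniform Hn Hc Ho Hadj).
Qed.
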